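(* Let $k$ be a field of characteristic $0$, $n\geq3$, let $\phi'$ be a regular quadratic form over $k$ in $n-2$ variables, $\phi=\langle1\rangle\perp(-\phi')$, and let $X\subset\mathbb A^n_k$ be the zero locus of $x_1x_2-\phi(1,x_3,\dots,x_n)$. Let $(R,m,\kappa)$ be a discrete valuation ring containing $k$, with fraction field $K$ and valuation $v$. Let $h\in X(K)$ with $h_i=h^*(x_i)$, and suppose $\phi_\kappa$ is anisotropic. (1) If $h$ lifts to $X({\rm Spec}\,R)$, then $v(h_1)=v(h_2)=0$. (2) If $h$ does not lift to $X({\rm Spec}\,R)$, then $v(h_1)<0$ or $v(h_2)<0$, and $\min\{v(h_1),v(h_2)\}=\min\{v(h_1),v(h_2),\dots,v(h_n)\}$.
   Context: $\phi_\kappa$ is the base change of $\phi$ to the residue field $\kappa$; $\langle 1\rangle$ is the form $x^2$ and $\perp$ the orthogonal sum. *)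

(* Defs.v *)
From HB Require Import structures.
From mathcomp Require Import all_boot all_order all_algebra.
From mathcomp Require Import constructive_ereal.
Set Implicit Arguments. Unset Strict Implicit. Unset Printing Implicit Defensive.
Import Order.TTheory GRing.Theory Num.Theory.
Local Open Scope ring_scope.

Definition qform (R : comPzRingType) (m : nat) (B : 'M[R]_m) (x : 'I_m -> R) : R :=
  \sum_(i < m) \sum_(j < m) B i j * x i * x j.

(* phi = <1> _|_ (- phi'), phi' given by the Gram matrix B, in variables (x0, x). *)
Definition phi_form (R : comPzRingType) (m : nat) (B : 'M[R]_m) (x0 : R)
  (x : 'I_m -> R) : R := x0 ^+ 2 - qform B x.

(* A normalized discrete valuation on the field K, with values in Z \cup {+oo}.
   Its valuation ring R = {x | 0 <= v x} is the DVR, with fraction field K. *)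
Definition discrete_valuation (K : fieldType) (v : K -> \bar int) : Prop :=
  [/\ forall x, v x = +oo%E <-> x = 0,
      forall x, v x <> -oo%E,
      forall x y, v (x * y)%R = (v x + v y)%E,
      forall x y, (Order.min (v x) (v y) <= v (x + y)%R)%E &
      exists pi, v pi = (1%:Z)%:E ].

(* res : K -> kappa restricted to R = {0 <= v} is a surjective ring morphism onto
   the field kappa whose kernel is the maximal ideal m = {0 < v};
   i.e. kappa is (isomorphic to) the residue field R/m. *)
Definition residue_map (K : fieldType) (v : K -> \bar int) (kappa : fieldType)
  (res : K -> kappa) : Prop :=
  [/\ forall x y, (0 <= v x)%E -> (0 <= v y)%E -> res (x + y) = res x + res y,
      forall x y, (0 <= v x)%E -> (0 <= v y)%E -> res (x * y) = res x * res y,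
      res 1 = 1,
      forall x, (0 <= v x)%E -> (res x = 0 <-> (0 < v x)%E) &
      forall z : kappa, exists x, (0 <= v x)%E /\ res x = z ].

(* Main.v *)
Require Import Defs.
From HB Require Import structures.
From mathcomp Require Import all_boot all_order all_algebra.
From mathcomp Require Import constructive_ereal.
From mathcomp Require Import zify ring.
Set Implicit Arguments. Unset Strict Implicit. Unset Printing Implicit Defensive.
Import Order.TTheory GRing.Theory Num.Theory.
Local Open Scope ring_scope.

Lemma vE0 (K : fieldType) (v : K -> \bar int) : discrete_valuation v -> v 0 = +oo%E.
Proof. by case=> H0 _ _ _ _; apply/H0. Qed.

Lemma vfin (K : fieldType) (v : K -> \bar int) : discrete_valuation v ->
  forall x : K, x != 0 -> exists r : int, v x = r%:E.
Proof.
case=> H0 Hn _ _ _ x /eqP nx. case E: (v x) => [r| |]; [by exists r | |].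
- by exfalso; apply: nx; apply/H0.
- by exfalso; apply: (Hn x).
Qed.

Lemma vM (K : fieldType) (v : K -> \bar int) : discrete_valuation v ->
  forall x y : K, v (x * y) = (v x + v y)%E.
Proof. by case. Qed.

Lemma vE1 (K : fieldType) (v : K -> \bar int) : discrete_valuation v -> v (1 : K) = 0%E.
Proof.
move=> Hv. have [r Hr] := vfin Hv (oner_neq0 K).
have := vM Hv 1 1. rewrite mulr1 Hr -EFinD => -[] e.
have -> : r = 0 by lia.
by [].
Qed.

Lemma vinv (K : fieldType) (v : K -> \bar int) : discrete_valuation v ->
  forall x : K, x != 0 -> v x^-1 = (- v x)%E.
Proof.
move=> Hv x nx. have [r Hr] := vfin Hv nx. have [s Hs] := vfin Hv (invr_neq0 nx).
have := vM Hv x x^-1. rewrite mulfV // vE1 // Hr Hs -EFinD => -[] e.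
rewrite -EFinN; congr EFin; lia.
Qed.

Lemma vN1 (K : fieldType) (v : K -> \bar int) : discrete_valuation v -> v (-1 : K) = 0%E.
Proof.
move=> Hv. have n1 : (-1 : K) != 0 by rewrite oppr_eq0 oner_neq0.
have [r Hr] := vfin Hv n1.
have := vM Hv (-1) (-1). rewrite mulrNN mulr1 vE1 // Hr -EFinD => -[] e.
have -> : r = 0 by lia.
by [].
Qed.

Lemma vN (K : fieldType) (v : K -> \bar int) : discrete_valuation v ->
  forall x : K, v (- x) = v x.
Proof.
move=> Hv x. by rewrite -mulN1r vM // vN1 // add0e.
Qed.

Lemma vD_ge0 (K : fieldType) (v : K -> \bar int) : discrete_valuation v ->
  forall x y : K, (0 <= v x)%E -> (0 <= v y)%E -> (0 <= v (x + y)%R)%E.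
Proof.
case=> _ _ _ Hmin _ x y hx hy. apply: le_trans (Hmin x y). by rewrite le_min hx hy.
Qed.

Lemma vB_ge0 (K : fieldType) (v : K -> \bar int) : discrete_valuation v ->
  forall x y : K, (0 <= v x)%E -> (0 <= v y)%E -> (0 <= v (x - y)%R)%E.
Proof. move=> Hv x y hx hy; apply: vD_ge0 => //; by rewrite vN. Qed.

Lemma vM_ge0 (K : fieldType) (v : K -> \bar int) : discrete_valuation v ->
  forall x y : K, (0 <= v x)%E -> (0 <= v y)%E -> (0 <= v (x * y)%R)%E.
Proof. move=> Hv x y hx hy; rewrite vM //; exact: adde_ge0. Qed.

Lemma res0 (K : fieldType) (v : K -> \bar int) (kappa : fieldType) (res : K -> kappa) :
  discrete_valuation v -> residue_map v res -> res 0 = 0.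
Proof.
move=> Hv [_ _ _ H _]. have z : (0 <= v 0%R)%E by rewrite vE0 //; exact: le0y.
apply/(H 0 z); rewrite vE0 //; exact: lt0y.
Qed.

Lemma resB (K : fieldType) (v : K -> \bar int) (kappa : fieldType) (res : K -> kappa) :
  discrete_valuation v -> residue_map v res ->
  forall x y, (0 <= v x)%E -> (0 <= v y)%E -> res (x - y) = res x - res y.
Proof.
move=> Hv [RA _ _ _ _] x y hx hy.
have e := RA (x - y) y (vB_ge0 Hv hx hy) hy. rewrite subrK in e.
by rewrite e addrK.
Qed.

Lemma res_qform (K : fieldType) (v : K -> \bar int) (kappa : fieldType) (res : K -> kappa)
  (k : fieldType) (iota : k -> K) m (B : 'M[k]_m) (y : 'I_m -> K) :
  discrete_valuation v -> residue_map v res ->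
  (forall c, 0 <= v (iota c))%E -> (forall i, 0 <= v (y i))%E ->
  (0 <= v (qform (map_mx iota B) y))%E /\
  res (qform (map_mx iota B) y) = qform (map_mx (res \o iota) B) (res \o y).
Proof.
move=> Hv Hr Hc Hy. have Hr' := Hr. case: Hr' => RA RM _ _ _.
have r0 := res0 Hv Hr.
have z0 : (0 <= v (0 : K)%R)%E by rewrite vE0 //; exact: le0y.
rewrite /qform.
apply: (big_ind2 (fun x y => (0 <= v x)%E /\ res x = y)).
- by split.
- move=> x1 x2 y1 y2 [h1 <-] [h2 <-]; split; [exact: vD_ge0 | exact: RA].
move=> i _.
apply: (big_ind2 (fun x y => (0 <= v x)%E /\ res x = y)).
- by split.
- move=> x1 x2 y1 y2 [h1 <-] [h2 <-]; split; [exact: vD_ge0 | exact: RA].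
move=> j _. rewrite !mxE /=.
have hij := vM_ge0 Hv (Hc (B i j)) (Hy i).
split; first exact: vM_ge0.
by rewrite RM // RM.
Qed.

Lemma phi_scale (K : fieldType) m (B : 'M[K]_m) (a c : K) (y : 'I_m -> K) :
  phi_form B (a * c) (fun i => y i * c) = phi_form B a y * c ^+ 2.
Proof.
rewrite /phi_form /qform mulrBl big_distrl /= exprMn; congr (_ - _).
apply: eq_bigr => i _; rewrite big_distrl /=; apply: eq_bigr => j _; ring.
Qed.

Lemma key (K : fieldType) (v : K -> \bar int) (kappa : fieldType) (res : K -> kappa)
  (k : fieldType) (iota : k -> K) m (B : 'M[k]_m)
  (y0 z1 z2 : K) (y : 'I_m -> K) :
  discrete_valuation v -> residue_map v res ->
  (forall c, 0 <= v (iota c))%E ->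
  (forall (y0 : kappa) (y : 'I_m -> kappa),
      phi_form (map_mx (res \o iota) B) y0 y = 0 -> y0 = 0 /\ (forall i, y i = 0)) ->
  (0 <= v y0)%E -> (0 <= v z1)%E -> (0 <= v z2)%E -> (forall i, 0 <= v (y i))%E ->
  z1 * z2 = phi_form (map_mx iota B) y0 y ->
  ((0 < v z1)%E \/ (0 < v z2)%E) ->
  (0 < v y0)%E /\ forall i, (0 < v (y i))%E.
Proof.
move=> Hv Hr Hc Han h0 h1 h2 hy e hpos.
have Hr' := Hr. case: Hr' => RA RM R1 R0 _.
have [hq rq] := res_qform B Hv Hr Hc hy.
have hy2 : (0 <= v (y0 ^+ 2)%R)%E by rewrite expr2; exact: vM_ge0.
have r12 : res (z1 * z2) = 0.
  apply/(R0 _ (vM_ge0 Hv h1 h2)). rewrite vM //.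
  case: hpos => p.
  - exact: lt_le_trans p (leeDl _ h2).
  - exact: lt_le_trans p (leeDr _ h1).
move: r12; rewrite e /phi_form (resB Hv Hr hy2 hq) rq expr2 RM // -expr2 => /Han [a b].
split; first by apply/(R0 _ h0).
by move=> i; apply/(R0 _ (hy i)); apply: b.
Qed.

Theorem lemma4p7 (k : fieldType) (n : nat) (B : 'M[k]_(n - 2))
  (K : fieldType) (iota : {rmorphism k -> K}) (v : K -> \bar int)
  (kappa : fieldType) (res : K -> kappa)
  (h1 h2 : K) (h : 'I_(n - 2) -> K) :
  [pchar k] =i pred0 ->
  (3 <= n)%N ->
  B^T = B -> \det B != 0 ->
  discrete_valuation v ->
  (forall c : k, (0 <= v (iota c))%E) ->
  residue_map v res ->
  h1 * h2 - phi_form (map_mx iota B) 1 h = 0 ->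
  (forall (y0 : kappa) (y : 'I_(n - 2) -> kappa),
      phi_form (map_mx (res \o iota) B) y0 y = 0 -> y0 = 0 /\ (forall i, y i = 0)) ->
  ([/\ (0 <= v h1)%E, (0 <= v h2)%E & forall i, (0 <= v (h i))%E] ->
     v h1 = 0%E /\ v h2 = 0%E)
  /\
  (~ [/\ (0 <= v h1)%E, (0 <= v h2)%E & forall i, (0 <= v (h i))%E] ->
     ((v h1 < 0)%E \/ (v h2 < 0)%E) /\
     Order.min (v h1) (v h2) =
       Order.min (v h1) (Order.min (v h2) (\big[Order.min/+oo%E]_(i < n - 2) v (h i)))).
Proof.
move=> _ n3 _ _ Hv Hc Hr /eqP; rewrite subr_eq0 => /eqP e Han.
have v1 := vE1 Hv.
have v1' : (0 <= v 1%R)%E by rewrite v1.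
split.
  case=> a b c.
  have F : ~ ((0 < v h1)%E \/ (0 < v h2)%E).
    move=> p.
    have [q _] := key Hv Hr Hc Han (y0 := 1) v1' a b c e p.
    by move: q; rewrite v1 ltxx.
  split; apply/eqP; rewrite eq_le ?a ?b andbT leNgt; apply/negP => p; apply: F; by [left|right].
move=> Hnot.
set M := \big[Order.min/+oo%E]_(i < n - 2) v (h i).
set m := Order.min (v h1) (Order.min (v h2) M).
have mM : (m <= M)%O by rewrite /m !ge_min lexx !orbT.
have mh1 : (m <= v h1)%O by rewrite /m !ge_min lexx.
have mh2 : (m <= v h2)%O by rewrite /m !ge_min lexx !orbT.
have Mi : forall i, (M <= v (h i))%O by move=> i; exact: bigmin_le.
have m0 : (m < 0)%E.
  rewrite ltNge; apply/negP => hm; apply: Hnot; split.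
  - exact: le_trans hm mh1.
  - exact: le_trans hm mh2.
  - move=> i; exact: le_trans hm (le_trans mM (Mi i)).
suff H : (v h1 <= m)%O \/ (v h2 <= m)%O.
  have mle : (m <= Order.min (v h1) (v h2))%O by rewrite le_min mh1 mh2.
  case: H => H.
  - have E : v h1 = m by apply/le_anti; rewrite H mh1.
    split; first by left; rewrite E.
    apply/le_anti; rewrite mle andbT -/m -E; by rewrite ge_min lexx.
  - have E : v h2 = m by apply/le_anti; rewrite H mh2.
    split; first by right; rewrite E.
    apply/le_anti; rewrite mle andbT -/m -E; by rewrite ge_min lexx orbT.
case: (boolP (m < v h1)%O) => a; last by left; rewrite leNgt.
case: (boolP (m < v h2)%O) => b; last by right; rewrite leNgt.
exfalso.
have mEM : m = M.
  rewrite /m. have [l1|l1] := leP (v h1) (Order.min (v h2) M).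
    by move: a; rewrite /m min_l // ltxx.
  have [l2|l2] := leP (v h2) M.
    by move: b; rewrite /m min_r ?(ltW l1) // min_l // ltxx.
  by [].
have n2 : (0 < n - 2)%N by lia.
have [j _ Hj] := eq_bigmin (Ordinal n2) xpredT (fun i => v (h i)) isT (fun i _ => leey _).
have vw : v (h j) = m by rewrite mEM /M Hj.
have w0 : h j != 0.
  apply/eqP => w0; move: m0; rewrite -vw w0 vE0 //.
have [r Hr0] := vfin Hv w0.
have mfin : m \is a fin_num by rewrite -vw Hr0.
have vdiv : forall x, v (x / h j) = (v x - m)%E by move=> x; rewrite vM // vinv // vw.
have e' : (h1 / h j) * (h2 / h j) = phi_form (map_mx iota B) (1 * (h j)^-1) (fun i => h i * (h j)^-1).
  by rewrite phi_scale -e; ring.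
have g0 : (0 <= v (1 * (h j)^-1)%R)%E by rewrite mul1r vinv // vw oppe_ge0 ltW.
have g1 : (0 <= v (h1 / h j)%R)%E by rewrite vdiv sube_ge0 ?mfin // ltW.
have g2 : (0 <= v (h2 / h j)%R)%E by rewrite vdiv sube_ge0 ?mfin // ltW.
have gy : forall i, (0 <= v ((fun i => h i * (h j)^-1)%R i))%E.
  by move=> i; rewrite /= vdiv sube_ge0 ?mfin // mEM.
have gp : (0 < v (h1 / h j)%R)%E \/ (0 < v (h2 / h j)%R)%E by left; rewrite vdiv sube_gt0.
have [_ q] := key Hv Hr Hc Han g0 g1 g2 gy e' gp.
by move: (q j); rewrite /= mulfV // v1 ltxx.
Qed.
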